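(* The set $\mathcal{E}_2$ of all $2$-essential subsets of $\operatorname{codes}(\{0,1\})$ is finite.
   Context: A coronal code over $S$ of length $m$ is a formal string $x=c:p_0p_1\dots p_{m-1}$ with $c,p_i\in S$; $\operatorname{center}(x)=c$, $\operatorname{petals}(x)=\{p_0,\dots,p_{m-1}\}$; codes are identified up to rotation/reversal of the petal string, giving $\operatorname{codes}(S)$. For $a,b,c\in S$ (indeterminates), $c^a_b:=\arccos\!\Big(\frac{(c+a)^2+(c+b)^2-(a+b)^2}{2(c+a)(c+b)}\Big)$, and $\alpha(x):=\sum_{i=0}^{m-1} c^{p_i}_{p_{i+1\bmod m}}$. For $\rho\in(0,\infty)^S$, $\alpha(x)|_\rho$ is the value obtained by substituting $\rho(s)$ for each symbol $s$. For $S=\{0,\dots,n-1\}$, a nonempty $C\subseteq\operatorname{codes}(S)$ is fundamental if $\{\operatorname{center}(x):x\in C\}=\{0,\dots,n-2\}$ and for every nonempty $K\subseteq\{0,\dots,n-2\}$ there is $D\subseteq C$ with $\{\operatorname{center}(x):x\in D\}=K$ and $\big(\bigcup_{x\in D}\operatorname{petals}(x)\big)\setminus K\ne\emptyset$. $C$ is $n$-essential if it is fundamental and there exist nondecreasing maps $\rho,\sigma:S\to(0,\infty)$ with $\alpha(x)|_\rho\le2\pi\le\alpha(x)|_\sigma$ for all $x\in C$. *)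

(* Defs.v *)
From Stdlib Require Import Reals List Arith.
Import ListNotations.
Open Scope R_scope.

(* A raw coronal code  c : p_0 p_1 ... p_{m-1}  is a pair (c, [p_0;...;p_{m-1}]).
   Symbols are natural numbers; the alphabet S = {0,...,n-1}. *)
Definition rawcode : Type := (nat * list nat)%type.
Definition center (x : rawcode) : nat := fst x.
Definition petal_string (x : rawcode) : list nat := snd x.
Definition petals (x : rawcode) (p : nat) : Prop := In p (snd x).

Definition code_over (n : nat) (x : rawcode) : Prop :=
  (center x < n)%nat /\ Forall (fun p => (p < n)%nat) (petal_string x).

Definition rot (k : nat) (l : list nat) : list nat := skipn k l ++ firstn k l.

Definition code_equiv (x y : rawcode) : Prop :=
  center x = center y /\
  exists k, petal_string y = rot k (petal_string x)
         \/ petal_string y = rev (rot k (petal_string x)).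

(* A subset of codes(S) (a set of equivalence classes) is represented by the
   set of raw codes over S lying in one of its classes, i.e. a saturated set. *)
Definition codes_subset (n : nat) (C : rawcode -> Prop) : Prop :=
  (forall x, C x -> code_over n x) /\
  (forall x y, C x -> code_equiv x y -> C y).

Definition angle (c a b : R) : R :=
  acos (((c + a) ^ 2 + (c + b) ^ 2 - (a + b) ^ 2) / (2 * (c + a) * (c + b))).

Definition alpha (rho : nat -> R) (x : rawcode) : R :=
  let ps := petal_string x in
  let m := length ps in
  fold_right Rplus 0
    (map (fun i => angle (rho (center x)) (rho (nth i ps 0%nat))
                         (rho (nth ((i + 1) mod m) ps 0%nat)))
         (seq 0 m)).

Definition fundamental (n : nat) (C : rawcode -> Prop) : Prop :=
  (exists x, C x) /\
  (forall x, C x -> (center x <= n - 2)%nat) /\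
  (forall k, (k <= n - 2)%nat -> exists x, C x /\ center x = k) /\
  (forall K : nat -> Prop,
      (exists k, K k) -> (forall k, K k -> (k <= n - 2)%nat) ->
      exists D : rawcode -> Prop,
        codes_subset n D /\ (forall x, D x -> C x) /\
        (forall x, D x -> K (center x)) /\
        (forall k, K k -> exists x, D x /\ center x = k) /\
        (exists x p, D x /\ petals x p /\ ~ K p)).

Definition pos_nondecr (n : nat) (rho : nat -> R) : Prop :=
  (forall i, (i < n)%nat -> 0 < rho i) /\
  (forall i j, (i <= j)%nat -> (j < n)%nat -> rho i <= rho j).

Definition essential (n : nat) (C : rawcode -> Prop) : Prop :=
  codes_subset n C /\ fundamental n C /\
  exists rho sigma : nat -> R,
    pos_nondecr n rho /\ pos_nondecr n sigma /\
    (forall x, C x -> alpha rho x <= 2 * PI <= alpha sigma x).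

(* Main.v *)
Require Import Defs.
From Stdlib Require Import Reals List Arith Lra Lia Psatz Classical.
Import ListNotations.
Open Scope R_scope.

Lemma acos_ge x : x <= 1/2 -> PI/3 <= acos x.
Proof.
  intros Hx. destruct (Rle_dec x (-1)) as [H|H].
  - unfold acos. destruct (Rle_dec x (-1)); [|contradiction].
    pose proof PI_RGT_0; lra.
  - destruct (Rle_lt_dec (PI/3) (acos x)) as [H'|H']; auto.
    exfalso. pose proof (acos_bound x) as [B1 B2].
    pose proof PI_RGT_0.
    assert (cos (PI/3) < cos (acos x)) as Hc.
    { apply cos_decreasing_1; lra. }
    rewrite cos_acos in Hc by lra. rewrite cos_PI3 in Hc. lra.
Qed.

Lemma angle_ge c a b : 0 < c -> c <= a -> c <= b -> PI/3 <= angle c a b.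
Proof.
  intros Hc Ha Hb. unfold angle. apply acos_ge.
  set (D := 2 * (c + a) * (c + b)).
  assert (HD : 0 < D) by (unfold D; nra).
  apply (Rmult_le_reg_r D); auto.
  replace (((c + a) ^ 2 + (c + b) ^ 2 - (a + b) ^ 2) / D * D)
    with ((c + a) ^ 2 + (c + b) ^ 2 - (a + b) ^ 2) by (field; lra).
  unfold D.
  assert (c*c <= a*b) by nra. assert (c*a <= a*b) by nra. assert (c*b <= a*b) by nra.
  nra.
Qed.

Lemma sum_ge (f : nat -> R) (l : list nat) :
  (forall i, In i l -> PI/3 <= f i) ->
  INR (length l) * (PI/3) <= fold_right Rplus 0 (map f l).
Proof.
  induction l as [|a l IH]; intros H; cbn [length map fold_right].
  - simpl; lra.
  - rewrite S_INR.
    assert (PI/3 <= f a) by (apply H; left; auto).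
    assert (INR (length l) * (PI / 3) <= fold_right Rplus 0 (map f l))
      by (apply IH; intros; apply H; right; auto).
    lra.
Qed.

Fixpoint words (k : nat) : list (list nat) :=
  match k with
  | O => [[]]
  | S k => [] :: map (cons 0%nat) (words k) ++ map (cons 1%nat) (words k)
  end.

Lemma words_in k l : (length l <= k)%nat -> Forall (fun p => (p < 2)%nat) l ->
  In l (words k).
Proof.
  revert l; induction k as [|k IH]; intros l Hl Hf.
  - destruct l; simpl in *; [auto | lia].
  - destruct l as [|p l]; simpl; [auto|]. right.
    inversion Hf; subst. simpl in Hl.
    apply in_or_app.
    destruct p as [|[|p]]; [left|right|lia]; apply in_map; apply IH; auto; lia.
Qed.

Fixpoint pow (U : list rawcode) : list (rawcode -> Prop) :=
  match U with
  | [] => [fun _ => False]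
  | u :: U => pow U ++ map (fun P x => x = u \/ P x) (pow U)
  end.

Lemma pow_ok U : forall C : rawcode -> Prop, (forall x, C x -> In x U) ->
  exists D, In D (pow U) /\ (forall x, C x <-> D x).
Proof.
  induction U as [|u U IH]; intros C HC; simpl.
  - exists (fun _ => False). split; [auto|]. intros x; split; [intros h; apply (HC x h)|tauto].
  - destruct (IH (fun x => C x /\ x <> u)) as [P [HP HE]].
    { intros x [h1 h2]. destruct (HC x h1); [congruence|auto]. }
    destruct (classic (C u)) as [Cu|Cu].
    + exists (fun x => x = u \/ P x). split.
      * apply in_or_app; right. apply in_map_iff. exists P; auto.
      * intros x; split.
        -- intros h. destruct (classic (x = u)); [left; auto|right; apply HE; auto].
        -- intros [->|h]; auto. apply HE in h; tauto.
    + exists P. split; [apply in_or_app; left; auto|].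
      intros x; split.
      * intros h. apply HE. split; auto. intros ->; contradiction.
      * intros h; apply HE in h; tauto.
Qed.

Theorem lemma6p5 :
  exists L : list (rawcode -> Prop),
    forall C : rawcode -> Prop, essential 2 C ->
      exists D, In D L /\ (forall x, C x <-> D x).
Proof.
  exists (pow (map (fun l => (0%nat, l)) (words 6))).
  intros C [[Hco _] [[_ [Hcen _]] [rho [sigma [[Hpos Hmon] [_ Ha]]]]]].
  apply pow_ok. intros [c ps] Hx.
  pose proof (Hco _ Hx) as [_ Hf]. simpl in Hf.
  pose proof (Hcen _ Hx) as Hc. simpl in Hc. assert (c = 0%nat) by lia. subst c.
  apply in_map_iff. exists ps. split; auto. apply words_in; auto.
  pose proof (Ha _ Hx) as [Hr _].
  unfold alpha in Hr. simpl in Hr.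
  assert (Hnth : forall k, (nth k ps 0 < 2)%nat).
  { intros k. destruct (lt_dec k (length ps)).
    - rewrite Forall_forall in Hf. apply Hf, nth_In; auto.
    - rewrite nth_overflow by lia. lia. }
  assert (Hr0 : 0 < rho 0%nat) by (apply Hpos; lia).
  assert (Hle : forall k, rho 0%nat <= rho (nth k ps 0%nat)).
  { intros k. apply Hmon; [lia | apply Hnth]. }
  pose proof (sum_ge (fun i => angle (rho 0%nat) (rho (nth i ps 0%nat))
     (rho (nth ((i + 1) mod length ps) ps 0%nat))) (seq 0 (length ps))) as Hs.
  rewrite length_seq in Hs.
  assert (INR (length ps) * (PI / 3) <= 2 * PI).
  { eapply Rle_trans; [apply Hs|exact Hr]. intros i _. apply angle_ge; auto. }
  destruct (le_lt_dec (length ps) 6); auto.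
  exfalso. assert (INR 7 <= INR (length ps)) by (apply le_INR; lia).
  pose proof PI_RGT_0. simpl in H0. nra.
Qed.
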